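(* Assume Martin's Axiom MA together with the negation of the Continuum Hypothesis ($2^{\aleph_0}>\aleph_1$). Let $\mathfrak B$ be an atomless Boolean algebra with $|\mathfrak B|<2^{\aleph_0}$. Then the following are equivalent: (1) $\mathfrak B$ satisfies the countable chain condition (every family of pairwise disjoint nonzero elements of $\mathfrak B$ is countable); (2) there is a decomposition $\mathfrak B\setminus\{0\}=\bigcup_{n<\omega}\mathfrak B_n$ such that for each $n<\omega$: $\mathfrak B_n\subseteq\mathfrak B_{n+1}$; $\mathrm{int}(\mathfrak B_n)\ge 2^{-n}$; and for every $a\in\mathfrak B_n$ there are disjoint $b,c\in\mathfrak B_{n+1}$ with $b\vee c\le a$.
   Context: A Boolean algebra is atomless if it has no atom, i.e. no nonzero element $a$ whose only elements below it are $0$ and $a$. Elements $b,c$ are disjoint if $b\wedge c=0$. For a family $\mathcal F\subseteq\mathfrak B\setminus\{0\}$, the intersection number $\mathrm{int}(\mathcal F)$ is the supremum of all $\alpha\ge0$ such that for every finite sequence $a_1,\dots,a_m$ of elements of $\mathcal F$ (repetitions allowed) there is a set $I\subseteq\{1,\dots,m\}$ with $|I|\ge\alpha m$ and $\bigwedge_{i\in I}a_i\ne 0$. MA is Martin's Axiom: for every partial order $\mathbf P$ with no uncountable family of pairwise incompatible elements and every family of fewer than $2^{\aleph_0}$ dense subsets of $\mathbf P$, there is a filter on $\mathbf P$ meeting all of them. *)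

(* Defs.v *)
From HB Require Import structures.
From mathcomp Require Import all_boot all_order all_algebra.
Set Implicit Arguments. Unset Strict Implicit. Unset Printing Implicit Defensive.
Import Order.TTheory GRing.Theory Num.Theory.

Definition countable (A : Type) : Prop := exists f : A -> nat, injective f.

Definition lt_continuum (A : Type) : Prop :=
  (exists f : A -> (nat -> bool), injective f) /\
  ~ (exists g : (nat -> bool) -> A, injective g).

(* Negation of CH: there is a cardinal strictly between aleph_0 and 2^aleph_0,
   i.e. aleph_1 < 2^aleph_0. *)
Definition notCH : Prop :=
  exists X : Type, ~ countable X /\ lt_continuum X.

(** Martin's Axiom, for partial orders (P, le), with the convention that
    [le p q] means "p is stronger than (extends) q". *)
Section MAdefs.
Variables (P : Type) (le : P -> P -> Prop).

Definition is_partial_order : Prop :=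
  (forall p, le p p) /\
  (forall p q r, le p q -> le q r -> le p r) /\
  (forall p q, le p q -> le q p -> p = q).

Definition compatible (p q : P) : Prop := exists r, le r p /\ le r q.

Definition po_ccc : Prop :=
  forall A : P -> Prop,
    (forall p q, A p -> A q -> p <> q -> ~ compatible p q) ->
    countable {p : P | A p}.

Definition dense (D : P -> Prop) : Prop :=
  forall p, exists q, D q /\ le q p.

Definition is_filter (G : P -> Prop) : Prop :=
  (exists p, G p) /\
  (forall p q, G p -> le p q -> G q) /\
  (forall p q, G p -> G q -> exists r, G r /\ le r p /\ le r q).
End MAdefs.

Definition MA : Prop :=
  forall (P : Type) (le : P -> P -> Prop), inhabited P ->
    is_partial_order le -> po_ccc le ->
    forall (I : Type) (D : I -> P -> Prop),
      lt_continuum I -> (forall i, dense le (D i)) ->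
      exists G : P -> Prop, is_filter le G /\
        forall i, exists p, G p /\ D i p.

(** Boolean algebras are complemented distributive lattices with top and
    bottom ([ctbDistrLatticeType]). *)
Local Open Scope order_scope.

Definition is_atom d (B : ctbDistrLatticeType d) (a : B) : Prop :=
  a != \bot /\ forall b : B, b <= a -> b = \bot \/ b = a.

Definition atomless d (B : ctbDistrLatticeType d) : Prop :=
  forall a : B, ~ is_atom a.

Definition ba_ccc d (B : ctbDistrLatticeType d) : Prop :=
  forall A : B -> Prop,
    (forall x, A x -> x != \bot) ->
    (forall x y, A x -> A y -> x <> y -> x `&` y = \bot) ->
    countable {x : B | A x}.

Definition int_witness d (B : ctbDistrLatticeType d) (F : B -> Prop) (a : rat) : Prop :=
  (0 <= a)%R /\
  forall (m : nat) (s : 'I_m -> B), (0 < m)%N -> (forall i, F (s i)) ->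
    exists I : {set 'I_m},
      (a * m%:R <= (#|I|)%:R)%R /\ \meet_(i in I) s i != \bot.

(* int(F) >= a, i.e. the supremum of the witnesses is >= a *)
Definition int_ge d (B : ctbDistrLatticeType d) (F : B -> Prop) (a : rat) : Prop :=
  forall b : rat, (b < a)%R -> exists c : rat, (b < c)%R /\ int_witness F c.

(* Main.v *)
Require Import Defs.
From HB Require Import structures.
From mathcomp Require Import all_boot all_order all_algebra.
From mathcomp Require Import boolp classical_sets wochoice finmap zify.
Import Order.TTheory GRing.Theory Num.Theory.
Import Order.Theory.
Set Implicit Arguments. Unset Strict Implicit. Unset Printing Implicit Defensive.
Local Open Scope order_scope.
Lemma sval_inj_prop (T : Type) (P : T -> Prop) (x y : {t | P t}) :
  sval x = sval y -> x = y.
Proof. by case: x => x hx; case: y => y hy /= E; apply: eq_exist. Qed.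

Lemma cnt_inj (A C : Type) (f : A -> C) : injective f -> countable C -> countable A.
Proof. by move=> fi [g gi]; exists (g \o f) => x y /gi/fi. Qed.

Lemma cnt_sub (A : Type) (P Q : A -> Prop) :
  (forall x, P x -> Q x) -> countable {x | Q x} -> countable {x | P x}.
Proof.
move=> PQ; apply: (@cnt_inj _ _ (fun x : {x | P x} => exist Q (sval x) (PQ _ (svalP x)))).
by move=> x y [] /sval_inj_prop.
Qed.

Lemma cnt_fibers (A M : Type) (f : A -> M) :
  countable M -> (forall m, countable {a | f a = m}) -> countable A.
Proof.
move=> [g gi] H.
pose e m := sval (cid (H m)).
have ei m : injective (e m) by rewrite /e; case: cid.
have K : forall m1 m2 (E : m1 = m2) (x : {a | f a = m1}) (y : {a | f a = m2}),
    e m1 x = e m2 y -> sval x = sval y.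
  by move=> m1 m2 E; case: m2 / E => x y /ei ->.
exists (fun a => choice.pickle (g (f a), e (f a) (exist _ a erefl))).
move=> a b /(pcan_inj (@choice.pickleK_inv _)) [] /gi E; exact: (K _ _ E (exist _ a erefl) (exist _ b erefl)).
Qed.

Lemma cnt_image (A C : Type) (f : A -> C) :
  countable A -> countable {c | exists a, f a = c}.
Proof.
move=> cA; pose g (c : {c | exists a, f a = c}) := sval (cid (svalP c)).
apply: (cnt_inj (f := g)) => // x y; rewrite /g.
case: cid => a /= fa; case: cid => b /= fb E; apply: sval_inj_prop.
by rewrite -fa -fb E.
Qed.

Lemma uncnt_inhabited (A : Type) : ~ countable A -> inhabited A.
Proof.
move=> nA; case: (pselect (inhabited A)) => // nI; exfalso; apply: nA.
by exists (fun _ => 0%N) => x; exfalso; apply: nI; constructor.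
Qed.

Definition Cantor := nat -> bool.

Lemma surj_inj (A C : Type) (F : A -> C) : (forall c, exists a, F a = c) ->
  exists g : C -> A, injective g.
Proof.
move=> H; exists (fun c => sval (cid (H c))) => x y.
by case: cid => a /= <-; case: cid => b /= <- ->.
Qed.

Lemma koenig (B M : Type) : countable M ->
  ~ (exists g : Cantor -> B, injective g) -> ~ (exists g : Cantor -> B * M, injective g).
Proof.
move=> [e ei] nB [g gi].
pose psi (s : nat -> Cantor) : Cantor := fun k =>
  if (choice.unpickle k : option (nat * nat)) is Some ij then s ij.1 ij.2 else false.
have psii : injective psi.
  move=> s t E; apply: funext => i; apply: funext => j.
  by have := congr1 (fun f => f (choice.pickle (i, j))) E; rewrite /psi choice.pickleK.
pose g' s := g (psi s).
have g'i : injective g' by move=> x y /gi /psii.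
pose F (n : nat) (b : B) : Cantor :=
  match pselect (exists s m, g' s = (b, m) /\ e m = n) with
  | left h => (sval (cid h)) n | right _ => fun _ => false end.
have nsurj : forall n, exists c, forall b, F n b <> c.
  move=> n; case: (pselect (exists c, forall b, F n b <> c)) => // H; exfalso.
  apply: nB; apply: (@surj_inj _ _ (F n)) => c.
  case: (pselect (exists b, F n b = c)) => // H2; exfalso; apply: H; exists c => b Fb.
  by apply: H2; exists b.
pose c n := sval (cid (nsurj n)).
have cP n b : F n b <> c n by rewrite /c; case: cid.
case E: (g' c) => [b m].
apply: (cP (e m) b); rewrite /F; case: pselect => [h|[]]; last by exists c, m.
case: cid => s /= [m' [E1 E2]].
have em : m' = m by apply: ei.
by have -> : s = c by apply: g'i; rewrite E E1 em.
Qed.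

Lemma lt_cont_prod (B M : Type) : countable M -> lt_continuum B -> lt_continuum (B * M).
Proof.
move=> cM [[h hi] nB]; split; last exact: koenig.
case: cM => e ei.
pose enc (n : nat) : Cantor := fun k => k == n.
have enci : injective enc.
  by move=> x y E; have := congr1 (fun f => f x) E; rewrite /enc eqxx => /esym/eqP.
pose il (x y : Cantor) : Cantor := fun k => if odd k then x k./2 else y k./2.
exists (fun bm => il (h bm.1) (enc (e bm.2))) => [[b m] [b' m']] /= E.
have E1 : h b = h b'.
  apply: funext => k; have := congr1 (fun f => f k.*2.+1) E.
  have hk : (k.*2.+1)./2 = k by exact: uphalf_double.
  by rewrite /il /= odd_double /= uphalf_double.
have E2 : enc (e m) = enc (e m').
  apply: funext => k; have := congr1 (fun f => f k.*2) E.
  by rewrite /il /= odd_double /= doubleK.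
by rewrite (hi _ _ E1) (ei _ _ (enci _ _ E2)).
Qed.
Section Omega1.
Variables (X A : Type).
Hypotheses (nX : ~ countable X) (ltX : lt_continuum X) (nA : ~ countable A).

Lemma omega1_into : exists (W : Type) (R : W -> W -> Prop) (iota : W -> A),
  (forall x y, R x y \/ R y x) /\ (forall w, countable {v | R v w}) /\
  ~ countable W /\ lt_continuum W /\ injective iota.
Proof.
have [r wor] := well_ordering_principle {classic X}.
have rmin : forall P : X -> Prop, (exists x, P x) ->
    exists z, P z /\ forall y, P y -> r z y.
  move=> P [x Px].
  have ne : nonempty [pred y : {classic X} | `[< P y >]].
    by exists x; rewrite inE; apply/asboolP.
  case: (wor _ ne) => z [[zin lb] _]; exists z; split.
    by move: zin; rewrite inE => /asboolP.
  by move=> y Py; apply: lb; rewrite inE; apply/asboolP.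
have rtot : forall x y, r x y \/ r y x.
  move=> x y; have [z [[->|->] H]] := rmin (fun z => z = x \/ z = y) (ex_intro _ x (or_introl erefl)).
    by left; apply: H; right.
  by right; apply: H; left.
have rrefl : forall x, r x x.
  by move=> x; have [z [-> H]] := rmin (fun z => z = x) (ex_intro _ x erefl); apply: H.
have ranti : forall x y, r x y -> r y x -> x = y.
  move=> x y rxy ryx.
  have ne : nonempty [pred z : {classic X} | (z == x) || (z == y)].
    by exists x; rewrite inE eqxx.
  case: (wor _ ne) => z [_ U].
  have mx : minimum_of r [pred z : {classic X} | (z == x) || (z == y)] x.
    split; first by rewrite inE eqxx.
    by move=> u; rewrite inE => /orP[] /eqP ->.
  have my : minimum_of r [pred z : {classic X} | (z == x) || (z == y)] y.
    split; first by rewrite inE eqxx orbT.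
    by move=> u; rewrite inE => /orP[] /eqP ->.
  by rewrite -(U _ mx) -(U _ my).
pose good x := countable {v | r v x}.
pose W := {x : X | good x}.
pose R (a b : W) := r (sval a) (sval b).
have Rtot : forall x y, R x y \/ R y x by move=> x y; apply: rtot.
have seg : forall w, countable {v | R v w}.
  move=> w; apply: (@cnt_inj _ _ (fun v : {v | R v w} => exist (fun u => r u (sval w)) (sval (sval v)) (svalP v))); last exact: (svalP w).
  by move=> u v [] /sval_inj_prop /sval_inj_prop.
have nW : ~ countable W.
  move=> [e ei].
  case: (pselect (exists x, ~ good x)) => [bad|allgood]; last first.
    apply: nX; exists (fun x => e (exist good x (match pselect (good x) with
      | left h => h | right h => False_ind _ (allgood (ex_intro _ x h)) end))).
    by move=> x y /ei [].
  have [z [bz zmin]] := rmin _ bad; apply: bz.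
  pose code (v : {v | r v z}) := match pselect (good (sval v)) with
    | left h => (e (exist good _ h)).+1 | right _ => 0%N end.
  have vz : forall v : {v | r v z}, ~ good (sval v) -> sval v = z.
    by move=> v nv; apply: (ranti (sval v) z); [exact: (svalP v) | exact: zmin].
  exists code => u v; rewrite /code.
  case: (pselect (good (sval u))) => [hu|nu]; case: (pselect (good (sval v))) => [hv|nv].
  - by move=> [] /ei [] E; apply: sval_inj_prop.
  - by [].
  - by [].
  - by move=> _; apply: sval_inj_prop; rewrite (vz u nu) (vz v nv).
have ltW : lt_continuum W.
  case: ltX => [[h hi] nC]; split.
    by exists (fun w : W => h (sval w)) => u v /hi /sval_inj_prop.
  by move=> [g gi]; apply: nC; exists (fun c => sval (g c)) => u v /sval_inj_prop /gi.
pose lt (a b : W) := R a b /\ a <> b.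
have wf : well_founded lt.
  move=> w; case: (pselect (Acc lt w)) => [//|nacc]; exfalso.
  have bad : exists x, exists h : good x, ~ Acc lt (exist good x h).
    exists (sval w), (svalP w).
    by have -> : exist good (sval w) (svalP w) = w by apply: sval_inj_prop.
  have [z [[hz nz] zmin]] := rmin _ bad.
  apply: nz; constructor => y [Ry neq].
  case: (pselect (Acc lt y)) => [//|ny]; exfalso; apply: neq; apply: sval_inj_prop => /=.
  apply: (ranti (sval y) z); first exact: Ry.
  apply: zmin; exists (svalP y).
  by have -> : exist good (sval y) (svalP y) = y by apply: sval_inj_prop.
have [a0] := uncnt_inhabited nA.
pose pick (Pr : A -> Prop) := match pselect (exists a, Pr a) with
  | left h => sval (cid h) | right _ => a0 end.
have pickP : forall Pr, (exists a, Pr a) -> Pr (pick Pr).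
  move=> Pr ex; rewrite /pick; case: (pselect (exists a, Pr a)) => [h|/(_ ex)//].
  by case: (cid h).
pose F (w : W) (rec : forall v, lt v w -> A) := pick (fun a => forall v (h : lt v w), rec v h <> a).
pose iota := Fix wf (fun _ => A) F.
have iota_eq : forall w, iota w = pick (fun a => forall v (h : lt v w), iota v <> a).
  move=> w; rewrite /iota Fix_eq //.
  move=> x f g E; rewrite /F; congr pick; apply: funext => a; apply: propext.
  by split=> H v h; [rewrite -E | rewrite E]; apply: H.
have ex : forall w, exists a, forall v (h : lt v w), iota v <> a.
  move=> w; case: (pselect (exists a, forall v (h : lt v w), iota v <> a)) => // H.
  exfalso; apply: nA.
  have H' : forall a, exists v, lt v w /\ iota v = a.
    move=> a; case: (pselect (exists v, lt v w /\ iota v = a)) => // H2; exfalso.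
    by apply: H; exists a => v h E; apply: H2; exists v.
  apply: (@cnt_inj _ _ (fun a => exist (fun v => R v w) (sval (cid (H' a))) (proj1 (proj1 (svalP (cid (H' a))))))); last exact: seg.
  move=> a b [] E; case: (cid (H' a)) E => va /= [_ <-]; by case: (cid (H' b)) => vb /= [_ <-] ->.
exists W, R, iota; do 4!split => //.
move=> x y E; case: (pselect (x = y)) => // neq; exfalso.
case: (Rtot x y) => [Rxy|Ryx].
  have := pickP _ (ex y); rewrite -iota_eq => /(_ x (conj Rxy neq)); exact.
have := pickP _ (ex x); rewrite -iota_eq => /(_ y (conj Ryx (fun e => neq (esym e)))).
by rewrite E.
Qed.
End Omega1.
Section Precal.
Hypotheses (hMA : MA) (hCH : notCH).

Lemma precaliber (P : Type) (le : P -> P -> Prop) : is_partial_order le -> po_ccc le ->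
  forall (A : Type) (b : A -> P), ~ countable A ->
  exists A' : A -> Prop, ~ countable {x | A' x} /\
    forall x y, A' x -> A' y -> compatible le (b x) (b y).
Proof.
move=> [lrefl [ltrans lanti]] ccc A b nA.
case: hCH => X [nX ltX].
have [W [R [iota [Rtot [seg [nW [ltW ii]]]]]]] := omega1_into nX ltX nA.
pose c w := b (iota w).
pose U r := {w | compatible le r (c w)}.
have cnt_unb : forall S : W -> Prop, countable {w | S w} ->
    ~ (forall w, exists v, S v /\ R w v).
  move=> S cS unb; apply: nW.
  pose f w := sval (cid (unb w)).
  have fR : forall w, S (f w) /\ R w (f w) by move=> w; rewrite /f; case: cid.
  pose g w := exist S (f w) (proj1 (fR w)).
  apply: (@cnt_fibers _ _ g) => // s.
  have H : forall u : {w | g w = s}, R (sval u) (sval s).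
    by move=> [w /= <-]; exact: (proj2 (fR _)).
  apply: (@cnt_inj _ _ (fun u : {w | g w = s} => exist (fun v => R v (sval s)) (sval u) (H u))); last exact: seg.
  by move=> u v [] /sval_inj_prop.
have [q qP] : exists q, forall r, le r q -> ~ countable (U r).
  case: (pselect (exists q, forall r, le r q -> ~ countable (U r))) => // H0; exfalso.
  have dens : forall q, exists r, le r q /\ countable (U r).
    move=> q; case: (pselect (exists r, le r q /\ countable (U r))) => // H1; exfalso.
    by apply: H0; exists q => r lrq cU; apply: H1; exists r.
  pose Fam (S : set P) := (forall x, S x -> countable (U x)) /\
     (forall x y, S x -> S y -> x <> y -> ~ compatible le x y).
  have [M [[MU Manti] maxM]] : exists M, Fam M /\ forall B, proper M B -> ~ Fam B.
    apply: Zorn_bigcup => F FFam Ftot; split.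
      by move=> x [S FS Sx]; apply: (proj1 (FFam _ FS)).
    move=> x y [S1 FS1 S1x] [S2 FS2 S2y].
    case: (Ftot _ _ FS1 FS2) => [sub|sub].
      by apply: (proj2 (FFam _ FS2)) => //; apply: sub.
    by apply: (proj2 (FFam _ FS1)) => //; apply: sub.
  have cM : countable {x | M x} by apply: ccc.
  have inM : forall w, exists r, M r /\ compatible le r (c w).
    move=> w; have [r' [lr' cr']] := dens (c w).
    case: (pselect (exists r, M r /\ compatible le r r')) => [[r [Mr [s [sr sr']]]]|nocomp].
      by exists r; split => //; exists s; split => //; exact: ltrans sr' lr'.
    exfalso; apply: (maxM (fun x => M x \/ x = r')).
      split; first by move=> x Mx; left.
      move=> sub; have := sub r' (or_intror erefl) => Mr'.
      by apply: nocomp; exists r'; split => //; exists r'; split; apply: lrefl.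
    split.
      by move=> x [Mx|->]; [apply: MU|].
    move=> x y [Mx|->] [My|->] neq.
    - exact: Manti.
    - by move=> [s [sx sy]]; apply: nocomp; exists x; split => //; exists s.
    - by move=> [s [sx sy]]; apply: nocomp; exists y; split => //; exists s.
    - by [].
  apply: nW.
  pose f w := sval (cid (inM w)).
  have fP : forall w, M (f w) /\ compatible le (f w) (c w) by move=> w; rewrite /f; case: cid.
  apply: (@cnt_fibers _ _ (fun w => exist M (f w) (proj1 (fP w)))) => // r0.
  have H : forall u : {w | exist M (f w) (proj1 (fP w)) = r0}, compatible le (sval r0) (c (sval u)).
    by move=> [w /= <-]; exact: (proj2 (fP _)).
  apply: (@cnt_inj _ _ (fun u => exist (fun w => compatible le (sval r0) (c w)) (sval u) (H u))).
    by move=> u v [] /sval_inj_prop.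
  exact: MU (svalP r0).
pose Pq := {r | le r q}.
pose leq (x y : Pq) := le (sval x) (sval y).
have po : is_partial_order leq.
  split; first by move=> x; apply: lrefl.
  split; first by move=> x y z; apply: ltrans.
  by move=> x y lxy lyx; apply: sval_inj_prop; apply: lanti.
have cccq : po_ccc leq.
  move=> Anti Ap.
  pose AP r := exists h : le r q, Anti (exist _ r h).
  have cAP : countable {r | AP r}.
    apply: ccc => x y [hx Ax] [hy Ay] neq [s [sx sy]].
    apply: (Ap _ _ Ax Ay); first by move=> [] E; apply: neq.
    by exists (exist _ s (ltrans _ _ _ sx hx)); split.
  have toAP : forall a : {a | Anti a}, AP (sval (sval a)).
    move=> a; exists (svalP (sval a)).
    have -> : exist _ (sval (sval a)) (svalP (sval a)) = sval a by apply: sval_inj_prop.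
    exact: (svalP a).
  apply: (@cnt_inj _ _ (fun a => exist AP (sval (sval a)) (toAP a))) => //.
  by move=> u v [] /sval_inj_prop /sval_inj_prop.
pose D (w : W) (s : Pq) := exists v, R w v /\ le (sval s) (c v).
have Dd : forall w, dense leq (D w).
  move=> w s; have nU := qP _ (svalP s).
  have [v [Rwv cv]] : exists v, R w v /\ compatible le (sval s) (c v).
    case: (pselect (exists v, R w v /\ compatible le (sval s) (c v))) => // H; exfalso.
    have Hu : forall u : U (sval s), R (sval u) w.
      move=> u; case: (Rtot (sval u) w) => // Rwu.
      by exfalso; apply: H; exists (sval u); split => //; exact: (svalP u).
    apply: nU; apply: (@cnt_inj _ _ (fun u : U (sval s) => exist (fun v => R v w) (sval u) (Hu u))); last exact: seg w.
    by move=> u v [] /sval_inj_prop.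
  case: cv => t [ts tc].
  by exists (exist _ t (ltrans _ _ _ ts (svalP s))); split => //; exists v.
have inh : inhabited Pq by constructor; exists q; apply: lrefl.
have [G [[[s0 Gs0] [Gup Gdir]] Gmeet]] := hMA inh po cccq ltW Dd.
exists (fun x => exists w, iota w = x /\ exists s, G s /\ le (sval s) (b x)); split.
  move=> cA.
  pose S w := exists s, G s /\ le (sval s) (c w).
  apply: (cnt_unb S).
    apply: (@cnt_inj _ _ (fun w : {w | S w} => exist (fun x => exists w, iota w = x /\ exists s, G s /\ le (sval s) (b x)) (iota (sval w)) (ex_intro _ (sval w) (conj erefl (svalP w))))) => //.
    by move=> u v [] /ii /sval_inj_prop.
  move=> w; have [s [Gs [v [Rwv lv]]]] := Gmeet w.
  by exists v; split => //; exists s.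
move=> x y [w1 [_ [s1 [G1 l1]]]] [w2 [_ [s2 [G2 l2]]]].
have [s3 [G3 [l31 l32]]] := Gdir _ _ G1 G2.
by exists (sval s3); split; [exact: ltrans l31 l1 | exact: ltrans l32 l2].
Qed.
End Precal.
Definition prodle (P P' : Type) (le : P -> P -> Prop) (le' : P' -> P' -> Prop)
  (x y : P * P') := le x.1 y.1 /\ le' x.2 y.2.

Lemma ccc_transfer (P Q : Type) (le : P -> P -> Prop) (le' : Q -> Q -> Prop) (phi : P -> Q) :
  injective phi -> (forall x y, compatible le' (phi x) (phi y) -> compatible le x y) ->
  po_ccc le' -> po_ccc le.
Proof.
move=> phii refl ccc' Anti Ap.
pose A2 y := exists x, Anti x /\ phi x = y.
have cA2 : countable {y | A2 y}.
  apply: ccc' => y1 y2 [x1 [A1 <-]] [x2 [A2' <-]] neq cy.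
  by apply: (Ap _ _ A1 A2'); [move=> E; apply: neq; rewrite E | exact: refl].
apply: (@cnt_inj _ _ (fun x : {x | Anti x} => exist A2 (phi (sval x)) (ex_intro _ (sval x) (conj (svalP x) erefl)))) => //.
by move=> u v [] /phii /sval_inj_prop.
Qed.

Section Prod.
Hypotheses (hMA : MA) (hCH : notCH).

Lemma prod_ccc P P' (le : P -> P -> Prop) (le' : P' -> P' -> Prop) :
  is_partial_order le -> po_ccc le -> (forall y, le' y y) -> po_ccc le' ->
  po_ccc (prodle le le').
Proof.
move=> po ccc refl' ccc' Anti Ap.
case: (pselect (countable {z | Anti z})) => // nA; exfalso.
have [A' [nA' comp]] := precaliber hMA hCH po ccc (fun z : {z | Anti z} => (sval z).1) nA.
have key : forall u v : {z | Anti z}, A' u -> A' v ->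
    compatible le' (sval u).2 (sval v).2 -> u = v.
  move=> u v Au Av [t [tu tv]]; case: (pselect (u = v)) => // neq; exfalso.
  have [s [su sv]] := comp _ _ Au Av.
  apply: (Ap _ _ (svalP u) (svalP v)); first by move=> E; apply: neq; apply: sval_inj_prop.
  by exists (s, t); split; split.
pose A2 y := exists u : {z | Anti z}, A' u /\ (sval u).2 = y.
have cA2 : countable {y | A2 y}.
  apply: ccc' => y1 y2 [u [Au <-]] [v [Av <-]] neq cy.
  by apply: neq; rewrite (key _ _ Au Av cy).
apply: nA'; apply: (@cnt_inj _ _ (fun u : {u | A' u} => exist A2 (sval (sval u)).2 (ex_intro _ (sval u) (conj (svalP u) erefl)))) => //.
move=> u v [] E; apply: sval_inj_prop; apply: key; [exact: svalP | exact: svalP |].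
by rewrite E; exists (sval (sval v)).2; split; apply: refl'.
Qed.
End Prod.

Section BA.
Variables (d : Order.disp_t) (B : ctbDistrLatticeType d).

Definition Bp := {x : B | x != \bot}.
Definition leBp (x y : Bp) := sval x <= sval y.

Lemma Bp_po : is_partial_order leBp.
Proof.
split; first by move=> x; apply: le_refl.
split; first by move=> x y z; apply: le_trans.
by move=> x y lxy lyx; apply: sval_inj_prop; apply: le_anti; apply/andP; split.
Qed.

Lemma Bp_compat (x y : Bp) : compatible leBp x y <-> sval x `&` sval y != \bot.
Proof.
split.
  move=> [r [rx ry]]; apply: (contra _ (svalP r)) => /eqP E.
  have h : sval r <= sval x `&` sval y by rewrite lexI; apply/andP; split.
  by move: h; rewrite E lex0.
by move=> h; exists (exist (fun z : B => z != \bot) _ h); split; rewrite /leBp /= ?leIl ?leIr.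
Qed.

Lemma Bp_ccc : ba_ccc B -> po_ccc leBp.
Proof.
move=> hB Anti Ap.
pose A0 x := exists h : x != \bot, Anti (exist _ x h).
have cA0 : countable {x | A0 x}.
  apply: hB; first by move=> x [].
  move=> x y [hx Ax] [hy Ay] neq; apply/eqP; case: eqP => // /eqP ne.
  exfalso; apply: (Ap _ _ Ax Ay); first by move=> [] E; apply: neq.
  by apply/Bp_compat.
have toA0 : forall a : {a | Anti a}, A0 (sval (sval a)).
  move=> a; exists (svalP (sval a)).
  have -> : exist _ (sval (sval a)) (svalP (sval a)) = sval a by apply: sval_inj_prop.
  exact: (svalP a).
apply: (@cnt_inj _ _ (fun a => exist A0 (sval (sval a)) (toA0 a))) => //.
by move=> u v [] /sval_inj_prop /sval_inj_prop.
Qed.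

Definition pn n (f : nat -> B) := forall i, if (i < n)%N then f i != \bot else f i == \top.
Definition Pn n := {f | pn n f}.
Definition lePn n (f g : Pn n) := forall i, sval f i <= sval g i.

Lemma Pn_po n : is_partial_order (@lePn n).
Proof.
split; first by move=> x i; apply: le_refl.
split; first by move=> x y z lxy lyz i; apply: le_trans (lxy i) (lyz i).
move=> x y lxy lyx; apply: sval_inj_prop; apply: funext => i.
by apply: le_anti; rewrite (lxy i) (lyx i).
Qed.

Lemma Pn_compat n (f g : Pn n) :
  (forall i, (i < n)%N -> sval f i `&` sval g i != \bot) -> compatible (@lePn n) f g.
Proof.
move=> H.
have hp : pn n (fun i => sval f i `&` sval g i).
  rewrite /pn => i; case: ifP => [/H //|ni].
  by move: (svalP f i) (svalP g i); rewrite ni => /eqP -> /eqP ->; rewrite meetxx.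
by exists (exist _ _ hp); split => i; rewrite /= ?leIl ?leIr.
Qed.

Lemma Pn_compat_inv n (f g : Pn n) : compatible (@lePn n) f g ->
  forall i, (i < n)%N -> sval f i `&` sval g i != \bot.
Proof.
move=> [r [rf rg]] i lin; have := svalP r i; rewrite lin => rn.
apply: (contra _ rn) => /eqP E.
have h : sval r i <= sval f i `&` sval g i by rewrite lexI rf rg.
by move: h; rewrite E lex0.
Qed.

Lemma restr_pn n (f : Pn n.+1) : pn n (fun i => if (i < n)%N then sval f i else \top).
Proof.
rewrite /pn => i; case: ifP => lin.
  by move: (svalP f i); rewrite (ltn_trans lin (ltnSn n)) lin.
by rewrite lin.
Qed.

Lemma last_pn n (f : Pn n.+1) : sval f n != \bot.
Proof. by move: (svalP f n); rewrite ltnSn. Qed.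

Definition restr n (f : Pn n.+1) : Pn n := exist (pn n) _ (restr_pn f).
Definition lastc n (f : Pn n.+1) : Bp := exist (fun z : B => z != \bot) _ (last_pn f).

Lemma Pn_ccc (hMA : MA) (hCH : notCH) : ba_ccc B -> forall n, po_ccc (@lePn n).
Proof.
move=> hB; elim=> [|n IH].
  move=> Anti _; exists (fun _ => 0%N) => x y _; apply: sval_inj_prop; apply: sval_inj_prop.
  by apply: funext => i; move: (svalP (sval x) i) (svalP (sval y) i) => /= /eqP -> /eqP ->.
apply: (@ccc_transfer _ _ _ (prodle (@lePn n) leBp) (fun f => (restr f, lastc f))).
- move=> f g [] E1 E2; apply: sval_inj_prop; apply: funext => i.
  case: (ltngtP i n) => [lin|gin|->].
  + by have := congr1 (fun h => h i) E1; rewrite /= lin.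
  + have nf : (i < n.+1)%N = false by rewrite ltnS leqNgt gin.
    by move: (svalP f i) (svalP g i); rewrite /= nf => /eqP -> /eqP ->.
  + by [].
- move=> f g [[r1 r2] [[l1 l2] [l1' l2']]]; apply: Pn_compat => i.
  rewrite ltnS leq_eqVlt => /orP[/eqP ->|lin].
    by apply/(Bp_compat (lastc f) (lastc g)); exists r2.
  have := Pn_compat_inv (ex_intro _ r1 (conj l1 l1')) lin.
  by rewrite /= lin.
- apply: prod_ccc => //; [exact: Pn_po | by move=> y; apply: le_refl | exact: Bp_ccc].
Qed.
End BA.
Definition anc (a w : nat * nat) : bool :=
  (a.1 <= w.1)%N && (w.2 %/ 2 ^ (w.1 - a.1) == a.2).
Definition shape (a : nat * nat) : bool := (0 < a.2)%N && (a.2 < 2 ^ a.1)%N.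
Definition ch1 (a : nat * nat) := (a.1.+1, a.2.*2).
Definition ch2 (a : nat * nat) := (a.1.+1, a.2.*2.+1).

Lemma anc_refl w : anc w w.
Proof. by rewrite /anc leqnn subnn expn0 divn1 eqxx. Qed.

Lemma anc_level a w : anc a w -> (a.1 <= w.1)%N.
Proof. by case/andP. Qed.

Lemma anc_trans a b c : anc a b -> anc b c -> anc a c.
Proof.
case: a b c => [a1 a2] [b1 b2] [c1 c2]; rewrite /anc /= => /andP[ab /eqP Eb] /andP[bc /eqP Ec].
rewrite (leq_trans ab bc) /=.
have -> : (c1 - a1 = (c1 - b1) + (b1 - a1))%N by lia.
by rewrite expnD divnMA Ec Eb.
Qed.

Lemma anc_lin a b w : anc a w -> anc b w -> (a.1 <= b.1)%N -> anc a b.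
Proof.
case: a b w => [a1 a2] [b1 b2] [w1 w2]; rewrite /anc /= => /andP[aw /eqP Ea] /andP[bw /eqP Eb] ab.
rewrite ab /= -Eb -divnMA -expnD.
have -> : ((w1 - b1) + (b1 - a1) = w1 - a1)%N by lia.
by rewrite Ea.
Qed.

Lemma anc_ch1 a : anc a (ch1 a).
Proof. by rewrite /anc /ch1 /= leqnSn subSnn expn1 -muln2 (mulnK _ (ltn0Sn 1)) eqxx. Qed.

Lemma anc_ch2 a : anc a (ch2 a).
Proof.
rewrite /anc /ch2 /= leqnSn subSnn expn1 -addn1 -muln2 divnMDl //.
by rewrite (divn_small (isT : (1 < 2)%N)) addn0 eqxx.
Qed.

Lemma no_both a w : anc (ch1 a) w -> anc (ch2 a) w -> False.
Proof.
by rewrite /anc /ch1 /ch2 /= => /andP[_ /eqP ->] /andP[_ /eqP] /n_Sn.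
Qed.

Lemma anc_same_level a b : anc a b -> a.1 = b.1 -> a = b.
Proof.
case: a b => [a1 a2] [b1 b2]; rewrite /anc /= => /andP[_ /eqP E] /= e.
by rewrite e subnn expn0 divn1 in E; rewrite e E.
Qed.

Lemma shape_ch1 a : shape a -> shape (ch1 a).
Proof.
case: a => [a1 a2]; rewrite /shape /ch1 /= expnS => /andP[h1 h2].
apply/andP; split; rewrite -muln2; lia.
Qed.

Lemma shape_ch2 a : shape a -> shape (ch2 a).
Proof.
case: a => [a1 a2]; rewrite /shape /ch2 /= expnS => /andP[h1 h2].
rewrite -muln2; lia.
Qed.

Lemma root_nanc z L : shape z -> (z.1 < L)%N -> ~~ anc z (L, 1%N).
Proof.
case: z => [z1 z2]; rewrite /shape /anc /= => /andP[z2p _] zL.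
rewrite divn_small; first by rewrite eq_sym (negbTE (lt0n_neq0 z2p)) andbF.
by rewrite -{1}(expn0 2) ltn_exp2l // subn_gt0.
Qed.

Lemma shape_root L : (0 < L)%N -> shape (L, 1%N).
Proof.
move=> L0; rewrite /shape /= -{1}(expn0 2) ltn_exp2l //.
Qed.

Lemma leaf_anc a n : (a.1 <= n)%N -> anc a (n, a.2 * 2 ^ (n - a.1))%N.
Proof.
move=> an; have h : (0 < 2 ^ (n - a.1))%N by rewrite expn_gt0.
by rewrite /anc /= an (mulnK _ h) eqxx.
Qed.

Lemma leaf_lt a n : shape a -> (a.1 <= n)%N -> (a.2 * 2 ^ (n - a.1) < 2 ^ n)%N.
Proof.
case/andP => _ h an.
have -> : (2 ^ n = 2 ^ a.1 * 2 ^ (n - a.1))%N by rewrite -expnD subnKC.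
by rewrite ltn_pmul2r // expn_gt0.
Qed.
Lemma pairwise_mem (T : eqType) (r : rel T) s x y : pairwise r s ->
  x \in s -> y \in s -> x != y -> r x y || r y x.
Proof.
elim: s => // a s IH; rewrite pairwise_cons => /andP[ra ps].
rewrite !in_cons => /orP[/eqP ->|xs] /orP[/eqP ->|ys] nxy.
- by rewrite eqxx in nxy.
- by rewrite (allP ra y ys).
- by rewrite (allP ra x xs) orbT.
- exact: IH.
Qed.

Lemma all2_ex_left (S T : eqType) (r : S -> T -> bool) ys xs x : all2 r ys xs ->
  x \in xs -> exists2 y, y \in ys & r y x.
Proof.
elim: ys xs => [|y ys IH] [|x' xs] //= /andP[ryx a2]; rewrite in_cons => /orP[/eqP ->|xin].
  by exists y; rewrite ?mem_head.
by have [y' y'in r'] := IH _ a2 xin; exists y'; rewrite // in_cons y'in orbT.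
Qed.

Lemma all2_ex_right (S T : eqType) (r : S -> T -> bool) ys xs y : all2 r ys xs ->
  y \in ys -> exists2 x, x \in xs & r y x.
Proof.
elim: ys xs => [|y0 ys IH] [|x' xs] //= /andP[ryx a2]; rewrite in_cons => /orP[/eqP ->|yin].
  by exists x'; rewrite ?mem_head.
by have [x'' xin r'] := IH _ a2 yin; exists x''; rewrite // in_cons xin orbT.
Qed.

Lemma all2_map_l (S T : eqType) (r r' : S -> T -> bool) (f : S -> S) ys xs :
  all2 r ys xs -> (forall y x, y \in ys -> r y x -> r' (f y) x) -> all2 r' (map f ys) xs.
Proof.
elim: ys xs => [|y ys IH] [|x xs] //= /andP[ryx a2] H.
rewrite (H y x (mem_head _ _) ryx) /=; apply: IH => // y' x' yin.
by apply: H; rewrite in_cons yin orbT.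
Qed.

Lemma all2_cat_split (S T : Type) (r : S -> T -> bool) ys s1 s2 : all2 r ys (s1 ++ s2) ->
  exists ys1 ys2, [/\ ys = ys1 ++ ys2, all2 r ys1 s1 & all2 r ys2 s2].
Proof.
elim: s1 ys => [|x s1 IH] ys /=; first by move=> a2; exists [::], ys.
case: ys => [|y ys] //= /andP[ryx /IH [ys1 [ys2 [-> a1 a2]]]].
by exists (y :: ys1), ys2; split => //=; rewrite ryx.
Qed.

Section BL.
Variables (d : Order.disp_t) (B : ctbDistrLatticeType d).
Implicit Types x y z w : B.

Lemma nz_le x y : x <= y -> x != \bot -> y != \bot.
Proof. by move=> xy; apply: contra => /eqP E; rewrite -lex0 -E. Qed.

Lemma meetC_id y w : y `&` w = \bot -> y `&` ~` w = y.
Proof. by move=> H; rewrite -[y in RHS]meetx1 -(joinxC w) meetUr H join0x. Qed.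

Lemma le_join_seq y (s : seq B) : y \in s -> y <= \join_(a <- s) a.
Proof. by move=> ys; move: (le_refl (\join_(a <- s) a)) => /joinsP_seq /(_ y ys isT). Qed.

Lemma meet_join_bot (s : seq B) x : (forall a, a \in s -> x `&` a = \bot) ->
  x `&` \join_(a <- s) a = \bot.
Proof.
elim: s => [|a s IH] H; first by rewrite big_nil meetx0.
rewrite big_cons meetUr H ?mem_head // IH ?joinx0 // => b bs.
by apply: H; rewrite in_cons bs orbT.
Qed.

Hypothesis hB : atomless B.

Lemma split_atomless z : z != \bot ->
  exists w, [/\ w != \bot, w <= z & z `&` ~` w != \bot].
Proof.
move=> zn; have na : ~ is_atom z by apply: hB.
have [w [wz [wn wz']]] : exists b, b <= z /\ b <> \bot /\ b <> z.
  case: (pselect (exists b, b <= z /\ b <> \bot /\ b <> z)) => // H; exfalso.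
  apply: na; split => // b bz.
  case: (pselect (b = \bot)) => [->|nb]; first by left.
  case: (pselect (b = z)) => [->|nbz]; first by right.
  by exfalso; apply: H; exists b.
exists w; split => //; first by apply/eqP.
apply/negP; rewrite -diffE diff_eq0 => zw; apply: wz'; apply: le_anti.
by rewrite wz zw.
Qed.

Lemma refine (xs : seq B) : all (fun x => x != \bot) xs ->
  exists ys, all2 (fun y x => (y <= x) && (y != \bot)) ys xs /\
             pairwise (fun a b => a `&` b == \bot) ys.
Proof.
elim: xs => [|x xs IH]; first by exists [::].
rewrite /= => /andP[xn /IH [ys [a2 pw]]].
set J := \join_(y <- ys) y.
case: (boolP (x `&` ~` J == \bot)) => [xJ|xJ]; last first.
  exists (x `&` ~` J :: ys); split; first by rewrite /= leIl xJ a2.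
  rewrite pairwise_cons pw andbT; apply/allP => y ys'.
  have yJ := le_join_seq ys'.
  rewrite -lex0 (le_trans (leI2 (le_refl _) yJ)) // meetAC -meetA meetxC meetx0.
  by [].
have xleJ : x <= J by rewrite -diff_eq0 diffE.
have [yj yjs xyj] : exists2 yj, yj \in ys & x `&` yj != \bot.
  case: (pselect (exists2 yj, yj \in ys & x `&` yj != \bot)) => // H; exfalso.
  have : x `&` J = \bot.
    apply: meet_join_bot => a ain; apply/eqP; case: eqP => // /eqP ne.
    by exfalso; apply: H; exists a.
  by move/meet_idPl: xleJ => ->; apply/eqP.
have [w [wn wz zw]] := split_atomless xyj.
exists (w :: map (fun y => y `&` ~` w) ys); split.
  rewrite /= wn (le_trans wz (leIl _ _)) /=.
  apply: (all2_map_l (f := fun y => y `&` ~` w) a2) => y x' yin /andP[yx yn].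
  rewrite (le_trans (leIl _ _) yx) /=.
  case: (boolP (y `&` w == \bot)) => [/eqP yw|yw]; first by rewrite meetC_id.
  have yyj : y = yj.
    case: (boolP (y == yj)) => [/eqP //|nyj]; exfalso.
    move: (pairwise_mem pw yin yjs nyj); rewrite [yj `&` y]meetC orbb => /eqP E.
    move: yw; rewrite -lex0 => /negP; apply; rewrite -E.
    by rewrite leI2 // (le_trans wz (leIr _ _)).
  rewrite yyj; apply: (nz_le _ zw); apply: leI2 => //; exact: leIr.
rewrite pairwise_cons; apply/andP; split.
  apply/allP => u /mapP[y _ ->].
  by rewrite meetCA meetxC meetx0.
rewrite pairwise_map; apply: sub_pairwise pw => a b /= /eqP ab.
by rewrite -lex0 -ab leI2 // leIl.
Qed.

Lemma split2 (es fs : seq B) : all (fun x => x != \bot) (es ++ fs) ->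
  exists b c, [/\ b `&` c = \bot,
     (forall e, e \in es -> b `&` e != \bot),
     (forall f, f \in fs -> c `&` f != \bot),
     b <= \join_(e <- es) e & c <= \join_(f <- fs) f].
Proof.
move=> /refine [ys [/all2_cat_split [ys1 [ys2 [-> a1 a2]]]]].
rewrite pairwise_cat => /and3P[ar _ _].
exists (\join_(y <- ys1) y), (\join_(y <- ys2) y); split.
- rewrite meetC; apply: meet_join_bot => a ain; rewrite meetC; apply: meet_join_bot => b bin.
  by apply/eqP; apply: (allrelP ar).
- move=> e ein; have [y yin /andP[ye yn]] := all2_ex_left a1 ein.
  by apply: (nz_le _ yn); rewrite lexI le_join_seq.
- move=> e ein; have [y yin /andP[ye yn]] := all2_ex_left a2 ein.
  by apply: (nz_le _ yn); rewrite lexI le_join_seq.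
- apply/joinsP_seq => y yin _; have [e ein /andP[ye _]] := all2_ex_right a1 yin.
  exact: le_trans ye (le_join_seq ein).
- apply/joinsP_seq => y yin _; have [e ein /andP[ye _]] := all2_ex_right a2 yin.
  exact: le_trans ye (le_join_seq ein).
Qed.
End BL.
Section QC.
Variables (d : Order.disp_t) (B : ctbDistrLatticeType d).
Local Notation T := (B * (nat * nat))%type.
Implicit Types (p q : {fset T}).

Definition Pw p (w : nat * nat) : B := \meet_(z <- p | anc z.2 w) z.1.

Lemma PwP p w x : x <= Pw p w <-> forall z, z \in p -> anc z.2 w -> x <= z.1.
Proof. by split => [/meetsP_seq|H]; [|apply/meetsP_seq]. Qed.

Lemma Pw_le p w z : z \in p -> anc z.2 w -> Pw p w <= z.1.
Proof. by move=> zp aw; move: (le_refl (Pw p w)) => /PwP /(_ z zp aw). Qed.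

Definition valid p := (forall z, z \in p -> shape z.2) /\
                      (forall z, z \in p -> Pw p z.2 != \bot).

Lemma L_deep p w : valid p -> (exists2 z, z \in p & anc z.2 w) -> Pw p w != \bot.
Proof.
move=> [_ vp] ex.
have [z0 [z0p az0 zmax]] : exists z0, [/\ z0 \in p, anc z0.2 w &
    forall z, z \in p -> anc z.2 w -> (z.2.1 <= z0.2.1)%N].
  pose Pk k := has (fun z : T => anc z.2 w && (z.2.1 == k)) p.
  have exk : exists k, Pk k.
    by case: ex => z zp aw; exists z.2.1; apply/hasP; exists z => //; rewrite aw eqxx.
  have bnd : forall k, Pk k -> (k <= w.1)%N.
    by move=> k /hasP[z _ /andP[/anc_level h /eqP <-]].
  case: (ex_maxnP exk bnd) => k Pk_k kmax.
  case/hasP: Pk_k => z0 z0p /andP[az0 /eqP e0]; exists z0; split => // z zp az.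
  by rewrite e0; apply: kmax; apply/hasP; exists z => //; rewrite az eqxx.
apply: (nz_le _ (vp _ z0p)); apply/PwP => z zp azw.
by apply: Pw_le => //; apply: anc_lin azw az0 (zmax _ zp azw).
Qed.

Lemma Pw_U p q w : Pw (p `|` q)%fset w = Pw p w `&` Pw q w.
Proof.
apply: le_anti; apply/andP; split.
  rewrite lexI; apply/andP; split; apply/PwP => z zp az; apply: Pw_le => //;
    by rewrite in_fsetU zp ?orbT.
apply/PwP => z; rewrite in_fsetU => /orP[zp|zq] az.
  exact: le_trans (leIl _ _) (Pw_le zp az).
exact: le_trans (leIr _ _) (Pw_le zq az).
Qed.

Hypothesis hB : atomless B.

Lemma split_ext p a nd : valid p -> (a, nd) \in p ->
  exists b c, [/\ valid (p `|` [fset (b, ch1 nd); (c, ch2 nd)])%fset,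
                  b `&` c = \bot & b `|` c <= a].
Proof.
move=> vpp anp; have [sp vp] := vpp.
pose es := Pw p (ch1 nd) :: [seq Pw p z.2 | z <- p & anc (ch1 nd) z.2].
pose fs := Pw p (ch2 nd) :: [seq Pw p z.2 | z <- p & anc (ch2 nd) z.2].
have h1 : Pw p (ch1 nd) != \bot by apply: L_deep => //; exists (a, nd) => //; apply: anc_ch1.
have h2 : Pw p (ch2 nd) != \bot by apply: L_deep => //; exists (a, nd) => //; apply: anc_ch2.
have nz : all (fun x => x != \bot) (es ++ fs).
  rewrite all_cat; apply/andP; split; apply/allP => e; rewrite in_cons => /orP[/eqP ->|] //;
    by case/mapP => z; rewrite mem_filter => /andP[_ zp] ->; apply: vp.
have [b [c [bc beN cfN bJ cJ]]] := split2 hB nz.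
have esa : \join_(e <- es) e <= a.
  apply/joinsP_seq => e ein _; move: ein; rewrite in_cons => /orP[/eqP ->|].
    by apply: Pw_le anp (anc_ch1 _).
  case/mapP => z; rewrite mem_filter => /andP[az zp] ->.
  by apply: Pw_le anp _; apply: anc_trans (anc_ch1 _) az.
have fsa : \join_(f <- fs) f <= a.
  apply/joinsP_seq => e ein _; move: ein; rewrite in_cons => /orP[/eqP ->|].
    by apply: Pw_le anp (anc_ch2 _).
  case/mapP => z; rewrite mem_filter => /andP[az zp] ->.
  by apply: Pw_le anp _; apply: anc_trans (anc_ch2 _) az.
exists b, c; split => //; last by rewrite leUx (le_trans bJ esa) (le_trans cJ fsa).
have shnd : shape nd := sp _ anp.
split.
  move=> z; rewrite !inE => /or3P[zp|/eqP ->|/eqP ->]; [exact: sp | exact: shape_ch1 | exact: shape_ch2].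
have inp' : forall z, (z \in (p `|` [fset (b, ch1 nd); (c, ch2 nd)])%fset) =
    [|| z \in p, z == (b, ch1 nd) | z == (c, ch2 nd)] by move=> z; rewrite !inE.
have n12 := no_both (a := nd).
move=> z zin; set w := z.2.
case: (boolP (anc (ch1 nd) w)) => [a1|na1].
  have ne : b `&` Pw p w != \bot.
    move: zin; rewrite inp' => /or3P[zp|/eqP ez|/eqP ez].
    - apply: beN; rewrite in_cons; apply/orP; right; apply/mapP; exists z => //.
      by rewrite mem_filter a1 zp.
    - by apply: beN; rewrite /w ez mem_head.
    - by exfalso; apply: (n12 w) => //; rewrite /w ez anc_refl.
  apply: (nz_le _ ne); apply/PwP => z'; rewrite inp' => /or3P[z'p|/eqP ->|/eqP ->] az.
  - exact: le_trans (leIr _ _) (Pw_le z'p az).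
  - exact: leIl.
  - by exfalso; apply: (n12 w).
case: (boolP (anc (ch2 nd) w)) => [a2|na2].
  have ne : c `&` Pw p w != \bot.
    move: zin; rewrite inp' => /or3P[zp|/eqP ez|/eqP ez].
    - apply: cfN; rewrite in_cons; apply/orP; right; apply/mapP; exists z => //.
      by rewrite mem_filter a2 zp.
    - by exfalso; move: na1; rewrite /w ez anc_refl.
    - by apply: cfN; rewrite /w ez mem_head.
  apply: (nz_le _ ne); apply/PwP => z'; rewrite inp' => /or3P[z'p|/eqP ->|/eqP ->] az.
  - exact: le_trans (leIr _ _) (Pw_le z'p az).
  - by exfalso; move: na1; rewrite az.
  - exact: leIl.
have zp : z \in p.
  move: zin; rewrite inp' => /or3P[//|/eqP ez|/eqP ez].
  - by move: na1; rewrite /w ez anc_refl.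
  - by move: na2; rewrite /w ez anc_refl.
apply: (nz_le _ (vp _ zp)); apply/PwP => z'; rewrite inp' => /or3P[z'p|/eqP ->|/eqP ->] az.
- exact: Pw_le z'p az.
- by move: na1; rewrite az.
- by move: na2; rewrite az.
Qed.

Lemma add_ext p a : valid p -> a != \bot -> exists nd, valid (p `|` [fset (a, nd)])%fset.
Proof.
move=> [sp vp] an; set L := (\max_(z <- p) z.2.1).+1.
have zL : forall z, z \in p -> (z.2.1 < L)%N.
  by move=> z zp; rewrite ltnS; apply: leq_bigmax_seq.
exists (L, 1%N).
have inp' : forall z, (z \in (p `|` [fset (a, (L, 1%N))])%fset) = (z \in p) || (z == (a, (L, 1%N))).
  by move=> z; rewrite !inE.
split.
  by move=> z; rewrite inp' => /orP[zp|/eqP ->]; [exact: sp | exact: shape_root].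
move=> z; rewrite inp' => /orP[zp|/eqP ->].
  apply: (nz_le _ (vp _ zp)); apply/PwP => z'; rewrite inp' => /orP[z'p|/eqP ->] az.
    exact: Pw_le z'p az.
  by move: (anc_level az) => /=; rewrite leqNgt zL.
apply: (nz_le _ an); apply/PwP => z'; rewrite inp' => /orP[z'p|/eqP ->] az //=.
by move: (root_nanc (sp _ z'p) (zL _ z'p)); rewrite az.
Qed.
End QC.
Lemma pigeon m K (c : 'I_m -> 'I_K) : (0 < K)%N ->
  exists v : 'I_K, (m <= K * #|[set i | c i == v]|)%N.
Proof.
move=> K0.
have sum : (\sum_(v : 'I_K) #|[set i | c i == v]| = m)%N.
  apply: (@etrans _ _ #|'I_m|); last exact: card_ord.
  rewrite -sum1_card (partition_big c (fun _ => true)) //=.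
  apply: eq_bigr => v _; rewrite cardsE -sum1_card; apply: eq_bigl => i.
  by [].
case: (pselect (exists v : 'I_K, (m <= K * #|[set i | c i == v]|)%N)) => // H; exfalso.
have lt : forall v : 'I_K, (K * #|[set i | c i == v]| <= m.-1)%N.
  move=> v; case: (leqP m (K * #|[set i | c i == v]|)) => [h|h]; first by exfalso; apply: H; exists v.
  by rewrite -ltnS (ltn_predK h).
have A := @leq_sum _ (index_enum 'I_K) (fun _ => true) _ (fun _ => m.-1) (fun v _ => lt v).
have C : (\sum_(v <- index_enum 'I_K | true) m.-1 = K * m.-1)%N.
  by rewrite sum_nat_const card_ord.
move: A; rewrite C -big_distrr /= sum.
have m0 : (0 < m)%N.
  case: (posnP m) => [e|//]; exfalso; apply: H; exists (Ordinal K0).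
  by apply: leq_trans (leq0n _); rewrite e.
rewrite leq_pmul2l // => h; lia.
Qed.
Lemma fin_count (S : Type) (K : nat) :
  (forall m (s : 'I_m -> S), injective s -> (m <= K)%N) -> countable S.
Proof.
move=> H.
pose P k := `[< exists l : seq {classic S}, uniq l /\ size l = k >].
have exP : exists k, P k by exists 0%N; apply/asboolP; exists [::].
have ubP : forall k, P k -> (k <= K)%N.
  move=> k /asboolP [l [ul <-]].
  case: l ul => [|x0 l] ul; first by [].
  apply: (H _ (fun i : 'I_(size (x0 :: l)) => nth x0 (x0 :: l) i)) => i j E.
  have : (nth x0 (x0 :: l) i == nth x0 (x0 :: l) j :> {classic S}) by apply/eqP.
  by rewrite nth_uniq // => /eqP /val_inj.
case: (ex_maxnP exP ubP) => k /asboolP [l [ul sl]] kmax.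
have all_in : forall x : {classic S}, x \in l.
  move=> x; case: (boolP (x \in l)) => // xl; exfalso.
  have : P k.+1 by apply/asboolP; exists (x :: l); rewrite /= xl ul sl.
  by move/kmax; rewrite ltnn.
exists (fun x : S => index (x : {classic S}) l) => x y E.
have ex := nth_index (x : {classic S}) (all_in x).
have ey := nth_index (y : {classic S}) (all_in y).
rewrite -ex E (set_nth_default (y : {classic S})) ?index_mem //.
Qed.

Section Main.
Variables (d : Order.disp_t) (B : ctbDistrLatticeType d).
Local Notation T := (B * (nat * nat))%type.

Definition Qt := {p : {fset T} | valid p}.
Definition leQ (x y : Qt) := (sval y `<=` sval x)%fset.

Lemma Q_po : is_partial_order leQ.
Proof.
split; first by move=> x; apply: fsubset_refl.
split; first by move=> x y z lxy lyz; apply: fsubset_trans lyz lxy.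
move=> x y lxy lyx; apply: sval_inj_prop; apply/eqP; rewrite eqEfsubset.
by apply/andP; split.
Qed.

Lemma Q_compat (x y : Qt) : valid (sval x `|` sval y)%fset -> compatible leQ x y.
Proof.
move=> h; exists (exist _ _ h); split; rewrite /leQ /=; [exact: fsubsetUl | exact: fsubsetUr].
Qed.

Lemma Q_ccc (hMA : MA) (hCH : notCH) (hB : ba_ccc B) : po_ccc leQ.
Proof.
move=> Anti Ap.
pose key (u : {x | Anti x}) : {fset (nat * nat)} := [fset z.2 | z in sval (sval u)]%fset.
apply: (@cnt_fibers _ {fset (nat * nat)} key).
  by exists (@choice.pickle _); apply: (pcan_inj (@choice.pickleK_inv _)).
move=> K.
pose ks := enum_fset K; pose N := size ks.
pose U := {u | key u = K}.
pose Pu (u : U) := sval (sval (sval u)).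
have keyP : forall (u : U) w, w \in K -> exists2 z, z \in Pu u & z.2 = w.
  move=> u w; rewrite -(svalP u) => /imfsetP[z zp ->]; by exists z.
have inK : forall (u : U) z, z \in Pu u -> z.2 \in K.
  move=> u z zp; rewrite -(svalP u); apply/imfsetP; by exists z.
pose tup (u : U) : nat -> B := fun i => if (i < N)%N then Pw (Pu u) (nth (0%N, 0%N) ks i) else \top.
have tupP : forall u, pn N (tup u).
  move=> u i; rewrite /tup; case: ifP => iN; last by rewrite iN.
  have [z zp ez] := keyP u _ (mem_nth (0%N, 0%N) iN).
  by rewrite iN -ez; exact: (proj2 (svalP (sval (sval u))) z zp).
pose tupN (u : U) : Pn B N := exist (pn N) (tup u) (tupP u).
have comp : forall u v : U, (forall i, (i < N)%N -> tup u i `&` tup v i != \bot) ->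
    compatible leQ (sval (sval u)) (sval (sval v)).
  move=> u v H; apply: Q_compat; split.
    move=> z; rewrite in_fsetU => /orP[] zp;
      [exact: (proj1 (svalP (sval (sval u))) z zp) | exact: (proj1 (svalP (sval (sval v))) z zp)].
  move=> z zuv.
  have zK : z.2 \in K by move: zuv; rewrite in_fsetU => /orP[] zp; [exact: (inK u) | exact: (inK v)].
  have iN : (index z.2 ks < N)%N by rewrite index_mem.
  have := H _ iN; rewrite /tup iN nth_index // -Pw_U.
  by [].
pose A2 y := exists u : U, tupN u = y.
have cA2 : countable {y | A2 y}.
  apply: (Pn_ccc hMA hCH hB) => y1 y2 [u <-] [v <-] neq cy.
  apply: (Ap _ _ (svalP (sval u)) (svalP (sval v))).
    by move=> E; apply: neq; have -> : u = v by apply: sval_inj_prop; apply: sval_inj_prop.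
  apply: comp => i iN; have := Pn_compat_inv cy iN; by [].
apply: (@cnt_inj _ _ (fun u : U => exist A2 (tupN u) (ex_intro _ u erefl))) => //.
move=> u v [] E; case: (pselect (u = v)) => // neq; exfalso.
apply: (Ap _ _ (svalP (sval u)) (svalP (sval v))).
  by move=> E2; apply: neq; apply: sval_inj_prop; apply: sval_inj_prop.
apply: comp => i iN; rewrite E meetxx.
by have := tupP v i; rewrite /= iN.
Qed.
End Main.
Section Final.
Variables (d : Order.disp_t) (B : ctbDistrLatticeType d).
Local Notation T := (B * (nat * nat))%type.

Lemma valid0 : valid (fset0 : {fset T}).
Proof. by split => z; rewrite in_fset0. Qed.

Lemma filter_fin (G : Qt B -> Prop) : is_filter (@leQ _ B) G ->
  forall m (f : 'I_m -> Qt B), (forall i, G (f i)) ->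
  exists r, G r /\ forall i, leQ r (f i).
Proof.
move=> [[x0 Gx0] [Gup Gdir]]; elim=> [|m IH] f Gf.
  by exists x0; split => // -[].
have [r1 [Gr1 H1]] := IH (fun i => f (widen_ord (leqnSn m) i)) (fun i => Gf _).
have [r [Gr [l1 l2]]] := Gdir _ _ Gr1 (Gf ord_max).
exists r; split => // i.
case: (unliftP ord_max i) => [j ->|->] //.
have -> : lift ord_max j = widen_ord (leqnSn m) j.
  by apply: val_inj; rewrite /= /bump leqNgt ltn_ord add0n.
rewrite /leQ; exact: fsubset_trans (H1 j) l1.
Qed.

Lemma main_dir (hMA : MA) (hCH : notCH) (hA : atomless B) (hB : ba_ccc B) (ltB : lt_continuum B) :
  exists Bn : nat -> B -> Prop,
       (forall x : B, x != \bot <-> exists n, Bn n x) /\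
       (forall n x, Bn n x -> Bn n.+1 x) /\
       (forall n, int_ge (Bn n) ((2%:R : rat) ^- n)%R) /\
       (forall n a, Bn n a ->
          exists b c : B, Bn n.+1 b /\ Bn n.+1 c /\ b `&` c = \bot /\ b `|` c <= a).
Proof.
have inh : inhabited (Qt B) by constructor; exists fset0; exact: valid0.
pose D (i : T) (x : Qt B) := (i.1 != \bot -> exists nd, (i.1, nd) \in sval x) /\
   ((exists b c, [/\ (b, ch1 i.2) \in sval x, (c, ch2 i.2) \in sval x,
                     b `&` c = \bot & b `|` c <= i.1]) \/
    (forall y, leQ y x -> (i.1, i.2) \notin sval y)).
have Dd : forall i, dense (@leQ _ B) (D i).
  move=> [a nd] x.
  have [x1 [lx1 Hx1]] : exists x1, leQ x1 x /\ (a != \bot -> exists nd', (a, nd') \in sval x1).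
    case: (boolP (a == \bot)) => [/eqP ->|an].
      by exists x; split; [apply: fsubset_refl|].
    have [nd' v'] := add_ext (svalP x) an.
    exists (exist _ _ v'); split; first exact: fsubsetUl.
    by move=> _; exists nd'; rewrite /= in_fsetU in_fset1 eqxx orbT.
  case: (pselect (exists y, leQ y x1 /\ (a, nd) \in sval y)) => [[y [ly iny]]|none].
    have [b [c [v2 bc bca]]] := split_ext hA (svalP y) iny.
    exists (exist _ _ v2); split; last first.
      rewrite /leQ /=; apply: fsubset_trans (fsubsetUl _ _); exact: fsubset_trans lx1 ly.
    split.
      move=> /Hx1 [nd' m']; exists nd'; rewrite /= in_fsetU; apply/orP; left.
      exact: (fsubsetP ly).
    by left; exists b, c; split => //=; rewrite !inE eqxx ?orbT.
  exists x1; split => //; split => //; right => y ly; apply/negP => iny; apply: none.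
  by exists y.
have ltI : lt_continuum T.
  apply: lt_cont_prod ltB.
  by exists (fun x : nat * nat => choice.pickle x); apply: (pcan_inj (@choice.pickleK_inv _)).
have [G [Gf Gmeet]] := hMA _ _ inh (@Q_po _ B) (Q_ccc hMA hCH hB) _ _ ltI Dd.
have Gf' := Gf; case: Gf' => [[x0 Gx0] [Gup Gdir]].
pose Bn n x := exists y, G y /\ exists nd, (x, nd) \in sval y /\ (nd.1 <= n)%N.
exists Bn; split; [|split; [|split]].
- move=> x; split.
    move=> xn; have [y [Gy [Dy1 _]]] := Gmeet (x, (0%N, 0%N)).
    have [nd m] := Dy1 xn; exists nd.1, y; split => //; exists nd; split => //.
  move=> [n [y [Gy [nd [m _]]]]].
  exact: (nz_le (Pw_le m (anc_refl nd)) (proj2 (svalP y) _ m)).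
- move=> n x [y [Gy [nd [m l]]]]; exists y; split => //; exists nd; split => //.
  exact: leqW.
- move=> n b bn; exists ((2%:R : rat) ^- n)%R; split => //.
  split; first by rewrite invr_ge0 exprn_ge0 // ler0n.
  move=> m s m0 Hs.
  pose y i := sval (cid (Hs i)).
  have yP : forall i, G (y i) /\ exists nd, (s i, nd) \in sval (y i) /\ (nd.1 <= n)%N.
    by move=> i; rewrite /y; case: cid.
  pose nd i := sval (cid (proj2 (yP i))).
  have ndP : forall i, (s i, nd i) \in sval (y i) /\ ((nd i).1 <= n)%N.
    by move=> i; rewrite /nd; case: cid.
  have [r [Gr lr]] := filter_fin Gf (fun i => proj1 (yP i)).
  have inr : forall i, (s i, nd i) \in sval r.
    by move=> i; apply: (fsubsetP (lr i)); exact: (proj1 (ndP i)).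
  have shp : forall i, shape (nd i) by move=> i; exact: (proj1 (svalP r) _ (inr i)).
  pose code (i : 'I_m) : 'I_(2 ^ n) := Ordinal (leaf_lt (shp i) (proj2 (ndP i))).
  have [v hv] := pigeon code (expn_gt0 2 n).
  exists [set i | code i == v]; split.
    rewrite ler_pdivrMl ?exprn_gt0 ?ltr0Sn //.
    by rewrite -natrX -natrM ler_nat.
  case: (posnP #|[set i | code i == v]|) => [e|c0].
    by move: hv; rewrite e muln0 leqNgt m0.
  have [i0 i0in] := card_gt0P c0.
  have ancv : forall i, i \in [set i | code i == v] -> anc (nd i) (n, val v).
    move=> i; rewrite inE => /eqP <-; exact: leaf_anc (proj2 (ndP i)).
  apply: (nz_le _ (L_deep (svalP r) _ )); last by exists (s i0, nd i0) => //; apply: ancv.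
  apply/meetsP => i iI; apply: Pw_le (inr i) _; exact: ancv.
- move=> n a [y [Gy [nd [m l]]]].
  have [y' [Gy' [_ [[b [c [mb mc bc bca]]]|no]]]] := Gmeet (a, nd).
    exists b, c; split; first by exists y'; split => //; exists (ch1 nd).
    split; first by exists y'; split => //; exists (ch2 nd).
    by split.
  have [s [Gs [ls1 ls2]]] := Gdir _ _ Gy Gy'.
  by have := no s ls2; rewrite (fsubsetP ls1 _ m).
Qed.

Lemma dir21 (Bn : nat -> B -> Prop) : (forall x : B, x != \bot <-> exists n, Bn n x) ->
  (forall n, int_ge (Bn n) ((2%:R : rat) ^- n)%R) -> ba_ccc B.
Proof.
move=> H1 H3 A Anz Adisj.
have bound : forall n m (s : 'I_m -> B), injective s ->
    (forall i, A (s i) /\ Bn n (s i)) -> (m <= 2 ^ n.+1)%N.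
  move=> n m s si Hs; case: (posnP m) => [->|m0] //.
  have blt : (((2%:R : rat) ^+ n.+1)^-1 < (2%:R : rat) ^- n)%R.
    by rewrite ltf_pV2 ?posrE ?exprn_gt0 ?ltr0Sn // exprS ltr_pMl ?exprn_gt0 ?ltr0Sn.
  have [c [bc [c0 wit]]] := H3 n _ blt.
  have [I [cI nI]] := wit m s m0 (fun i => proj2 (Hs i)).
  have I1 : (#|I| <= 1)%N.
    rewrite leqNgt; apply/negP => /card_gt1P [i [j [iI jI ij]]].
    move: nI; apply/negP; rewrite negbK -lex0.
    have le_i : \meet_(k in I) s k <= s i by move: (le_refl (\meet_(k in I) s k)) => /meetsP /(_ i iI).
    have le_j : \meet_(k in I) s k <= s j by move: (le_refl (\meet_(k in I) s k)) => /meetsP /(_ j jI).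
    have -> : \bot = s i `&` s j.
      apply/esym; apply: Adisj; [exact: (proj1 (Hs i)) | exact: (proj1 (Hs j)) |].
      by move=> /si E; move: ij; rewrite E eqxx.
    by rewrite lexI le_i le_j.
  have I1' : ((#|I|%:R : rat) <= 1)%R by rewrite -(mulr1n 1) ler_nat.
  have bm : (((2%:R : rat) ^+ n.+1)^-1 * m%:R <= 1)%R.
    apply: le_trans (le_trans cI I1').
    by apply: ler_wpM2r; [exact: ler0n | exact: ltW].
  move: bm; rewrite ler_pdivrMl ?exprn_gt0 ?ltr0Sn // mulr1 -natrX ler_nat.
  by [].
pose f (u : {x | A x}) := sval (cid ((H1 (sval u)).1 (Anz _ (svalP u)))).
have fP : forall u, Bn (f u) (sval u) by move=> u; rewrite /f; case: cid.
apply: (@cnt_fibers _ nat f); first by exists id.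
move=> n; apply: (@fin_count _ (2 ^ n.+1)) => m s si.
apply: (bound n m (fun i => sval (sval (s i)))).
  by move=> i j /sval_inj_prop /sval_inj_prop /si.
move=> i; split; first exact: (svalP (sval (s i))).
by case: (s i) => u /= <-; apply: fP.
Qed.
End Final.

Theorem theorem4p3 :
  MA -> notCH ->
  forall (d : Order.disp_t) (B : ctbDistrLatticeType d),
    atomless B -> lt_continuum B ->
    (ba_ccc B <->
     exists Bn : nat -> B -> Prop,
       (forall x : B, x != \bot <-> exists n, Bn n x) /\
       (forall n x, Bn n x -> Bn n.+1 x) /\
       (forall n, int_ge (Bn n) ((2%:R : rat) ^- n)%R) /\
       (forall n a, Bn n a ->
          exists b c : B, Bn n.+1 b /\ Bn n.+1 c /\ b `&` c = \bot /\ b `|` c <= a)).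
Proof.
move=> hMA hCH d B hA ltB; split.
  by move=> hB; apply: main_dir.
by move=> [Bn [H1 [_ [H3 _]]]]; apply: (dir21 H1 H3).
Qed.
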